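(* Let $\varphi(z)=-1/\overline{z}$ and let $f:\mathbb{C}_\infty\to\mathbb{C}_\infty$ be a rational map of degree at least $2$ with $f\circ\varphi=\varphi\circ f$. If $\Omega$ is a forward invariant component of the Fatou set $F(f)$ (i.e. $f(\Omega)=\Omega$), then $W=\varphi(\Omega)$ is also a forward invariant component of $F(f)$, and $W$ is of the same type as $\Omega$ (attracting, super-attracting, parabolic, Siegel disk, or Herman ring).
   Context: The Fatou set $F(f)$ is the maximal open set on which $\{f^n\}$ is normal. A forward invariant Fatou component $\Omega$ is: an attracting component if it contains an attracting fixed point $\zeta$ ($0<|f'(\zeta)|<1$); a super-attracting component if it contains a fixed point with $f'(\zeta)=0$; a parabolic component if there is a fixed point $\zeta\in\partial\Omega$ with $f'(\zeta)$ a root of unity and $f^n\to\zeta$ on $\Omega$; a Siegel disk if $f|_\Omega$ is analytically conjugate to an irrational Euclidean rotation of the unit disk; a Herman ring if $f|_\Omega$ is analytically conjugate to an irrational Euclidean rotation of some round annulus. (Multipliers at $\infty$ are defined via conjugation by $1/z$.) Every forward invariant Fatou component of a rational map of degree $\ge2$ is of exactly one of these types. *)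

(* Defs.v *)
From HB Require Import structures.
From mathcomp Require Import all_boot all_order all_algebra.
From mathcomp Require Import complex.
From mathcomp Require Import reals trigo.
Set Implicit Arguments. Unset Strict Implicit. Unset Printing Implicit Defensive.
Import Order.TTheory GRing.Theory Num.Theory.
Local Open Scope ring_scope.
Local Open Scope complex_scope.

Section Dyn.
Variable R : realType.

(* The Riemann sphere: None is the point at infinity. *)
Definition sphere := option R[i].

Definition cnorm2 (z : R[i]) : R := let: a +i* b := z in a ^+ 2 + b ^+ 2.
Definition cnorm (z : R[i]) : R := Num.sqrt (cnorm2 z).

Definition chordal (a b : sphere) : R :=
  match a, b with
  | Some x, Some y =>
      2 * cnorm (x - y) / (Num.sqrt (1 + cnorm2 x) * Num.sqrt (1 + cnorm2 y))
  | Some x, None => 2 / Num.sqrt (1 + cnorm2 x)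
  | None, Some y => 2 / Num.sqrt (1 + cnorm2 y)
  | None, None => 0
  end.

Definition sopen (U : sphere -> Prop) :=
  forall x, U x -> exists e : R, 0 < e /\ forall y, chordal x y < e -> U y.

Definition sconnected (A : sphere -> Prop) :=
  forall U V : sphere -> Prop, sopen U -> sopen V ->
    (forall x, A x -> U x \/ V x) ->
    (exists x, A x /\ U x) -> (exists x, A x /\ V x) ->
    exists x, [/\ A x, U x & V x].

Definition locunif_cvg (U : sphere -> Prop) (g : nat -> sphere -> sphere)
    (h : sphere -> sphere) :=
  forall x, U x -> exists d : R, [/\ 0 < d, (forall y, chordal x y < d -> U y) &
    forall e : R, 0 < e -> exists N : nat, forall k, (N <= k)%N ->
      forall y, chordal x y < d -> chordal (g k y) (h y) < e].

Definition normal_iterates (f : sphere -> sphere) (U : sphere -> Prop) :=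
  forall m : nat -> nat, exists s : nat -> nat,
    (forall k, (s k < s k.+1)%N) /\
    exists h : sphere -> sphere, locunif_cvg U (fun k => iter (m (s k)) f) h.

Definition fatou (f : sphere -> sphere) (x : sphere) :=
  exists U, [/\ sopen U, U x & normal_iterates f U].

Definition fatou_component (f : sphere -> sphere) (O : sphere -> Prop) :=
  [/\ (exists x, O x), (forall x, O x -> fatou f x), sconnected O &
      forall B, sconnected B -> (forall x, O x -> B x) ->
        (forall x, B x -> fatou f x) -> forall x, B x -> O x].

Definition forward_invariant (f : sphere -> sphere) (O : sphere -> Prop) :=
  (forall x, O x -> O (f x)) /\ (forall y, O y -> exists x, O x /\ f x = y).

Definition rat_of_polys (p q : {poly R[i]}) (s : sphere) : sphere :=
  match s with
  | Some z => if q.[z] == 0 then None else Some (p.[z] / q.[z])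
  | None => if (size q < size p)%N then None
            else if size p == size q then Some (lead_coef p / lead_coef q)
            else Some 0
  end.

Definition rational_map (f : sphere -> sphere) (d : nat) :=
  exists p q : {poly R[i]}, [/\ q != 0, coprimep p q,
    d = (maxn (size p) (size q)).-1 & forall s, f s = rat_of_polys p q s].

Definition phi (s : sphere) : sphere :=
  match s with
  | Some z => if z == 0 then None else Some (- (z^*)^-1)
  | None => Some 0
  end.

(* the chart z |-> 1/z, used at infinity *)
Definition cinv (s : sphere) : sphere :=
  match s with
  | Some z => if z == 0 then None else Some z^-1
  | None => Some 0
  end.

Definition has_deriv (g : R[i] -> sphere) (a b l : R[i]) :=
  g a = Some b /\
  forall e : R, 0 < e -> exists d : R, 0 < d /\
    forall z, 0 < cnorm (z - a) < d ->
      exists w, g z = Some w /\ cnorm ((w - b) / (z - a) - l) < e.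

Definition multiplier (f : sphere -> sphere) (zeta : sphere) (l : R[i]) :=
  f zeta = zeta /\
  match zeta with
  | Some a => has_deriv (fun z => f (Some z)) a a l
  | None => has_deriv (fun z => cinv (f (cinv (Some z)))) 0 0 l
  end.

Definition cdiff (g : R[i] -> R[i]) (a : R[i]) :=
  exists l, forall e : R, 0 < e -> exists d : R, 0 < d /\
    forall z, 0 < cnorm (z - a) < d -> cnorm ((g z - g a) / (z - a) - l) < e.

Definition holo_on (h : sphere -> R[i]) (O : sphere -> Prop) :=
  forall s, O s ->
    match s with
    | Some a => cdiff (fun z => h (Some z)) a
    | None => cdiff (fun z => h (cinv (Some z))) 0
    end.

Definition rot (theta : R) : R[i] :=
  (cos (2 * pi * theta)) +i* (sin (2 * pi * theta)).

Definition conj_irr_rotation (f : sphere -> sphere) (O : sphere -> Prop)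
    (D : R[i] -> Prop) :=
  exists (h : sphere -> R[i]) (theta : R),
    [/\ (forall r : rat, theta != ratr r),
        holo_on h O,
        (forall s, O s -> D (h s)),
        (forall s t, O s -> O t -> h s = h t -> s = t) /\
          (forall w, D w -> exists s, O s /\ h s = w) &
        (forall s, O s -> h (f s) = rot theta * h s)].

Definition attracting_comp f (O : sphere -> Prop) :=
  exists zeta l, [/\ O zeta, multiplier f zeta l & 0 < cnorm l < 1].

Definition superattracting_comp f (O : sphere -> Prop) :=
  exists zeta, O zeta /\ multiplier f zeta 0.

Definition parabolic_comp f (O : sphere -> Prop) :=
  exists zeta l (n : nat),
    [/\ ~ O zeta /\ (forall e : R, 0 < e -> exists s, O s /\ chordal zeta s < e),
        multiplier f zeta l, (0 < n)%N /\ l ^+ n = 1 &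
        forall s, O s -> forall e : R, 0 < e -> exists N : nat,
          forall k, (N <= k)%N -> chordal (iter k f s) zeta < e].

Definition siegel_disk f (O : sphere -> Prop) :=
  conj_irr_rotation f O (fun w => cnorm w < 1).

Definition herman_ring f (O : sphere -> Prop) :=
  exists r1 r2 : R, 0 < r1 < r2 /\
    conj_irr_rotation f O (fun w => r1 < cnorm w < r2).

Definition same_type f (O W : sphere -> Prop) :=
  [/\ attracting_comp f O <-> attracting_comp f W,
      superattracting_comp f O <-> superattracting_comp f W,
      parabolic_comp f O <-> parabolic_comp f W,
      siegel_disk f O <-> siegel_disk f W &
      herman_ring f O <-> herman_ring f W].

End Dyn.

(* Main.v *)
Require Import Defs.
From HB Require Import structures.
From mathcomp Require Import all_boot all_order all_algebra.
From mathcomp Require Import complex.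
From mathcomp Require Import reals trigo.
From mathcomp Require Import ring lra.
From Stdlib Require Import FunctionalExtensionality PropExtensionality.
Set Implicit Arguments. Unset Strict Implicit. Unset Printing Implicit Defensive.
Import Order.TTheory GRing.Theory Num.Theory.
Local Open Scope ring_scope.

Section S.
Variable R : realType.
Implicit Types x y z : R[i].

Lemma cnormE x : cnorm x = Normc.normc x.
Proof. by case: x. Qed.
Lemma cnorm_ge0 x : 0 <= cnorm x.
Proof. by rewrite /cnorm sqrtr_ge0. Qed.
Lemma cnormM x y : cnorm (x * y) = cnorm x * cnorm y.
Proof. by rewrite !cnormE Normc.normcM. Qed.
Lemma cnormV x : cnorm (x^-1) = (cnorm x)^-1.
Proof. by rewrite !cnormE Normc.normcV. Qed.
Lemma cnormD x y : cnorm (x + y) <= cnorm x + cnorm y.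
Proof. by rewrite !cnormE le_normcD. Qed.
Lemma cnormN x : cnorm (- x) = cnorm x.
Proof. by rewrite !cnormE normcN. Qed.
Lemma cnorm_eq0 x : (cnorm x == 0) = (x == 0).
Proof. apply/eqP/eqP; last by move->; rewrite cnormE Normc.normc0.
by rewrite cnormE => /Normc.eq0_normc. Qed.
Lemma cnormJ x : cnorm (x^*) = cnorm x.
Proof. by case: x => a b; rewrite /cnorm /cnorm2 /= sqrrN. Qed.
Lemma cnorm0 : cnorm (0 : R[i]) = 0.
Proof. by apply/eqP; rewrite cnorm_eq0. Qed.
Lemma cnorm1 : cnorm (1 : R[i]) = 1.
Proof. by rewrite cnormE Normc.normc1. Qed.
Lemma cnormB x y : cnorm (x - y) = cnorm (y - x).
Proof. by rewrite -cnormN opprB. Qed.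
Lemma cnorm2E x : cnorm2 x = cnorm x ^+ 2.
Proof. by rewrite /cnorm sqr_sqrtr //; case: x => a b /=; rewrite addr_ge0 ?sqr_ge0. Qed.
Lemma cnorm_gt0 x : x != 0 -> 0 < cnorm x.
Proof. by move=> nx; rewrite lt_def cnorm_eq0 nx cnorm_ge0. Qed.

Lemma phiK : involutive (@phi R).
Proof.
case=> [z|]; last by rewrite /= eq_refl.
case: (eqVneq z 0) => [->|nz]; first by rewrite /= eq_refl.
rewrite {2}/phi (negbTE nz) /phi.
have -> : (- (z^*)^-1 == 0) = false.
  by apply/negbTE; rewrite oppr_eq0 invr_eq0 conjC_eq0.
by rewrite rmorphN /= fmorphV /= conjCK invrN invrK opprK.
Qed.

Definition NN x : R := Num.sqrt (1 + cnorm2 x).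
Lemma NN0 : NN 0 = 1.
Proof. by rewrite /NN cnorm2E cnorm0 expr0n /= addr0 sqrtr1. Qed.
Lemma NN_gt0 x : 0 < NN x.
Proof. by rewrite /NN sqrtr_gt0 cnorm2E ltr_pwDl // sqr_ge0. Qed.
Lemma NNphi x : x != 0 -> NN (- (x^*)^-1) = NN x / cnorm x.
Proof.
move=> nx; have cx := cnorm_gt0 nx.
rewrite /NN !cnorm2E cnormN cnormV cnormJ.
have -> : 1 + (cnorm x)^-1 ^+ 2 = (1 + cnorm x ^+ 2) * ((cnorm x)^-1 ^+ 2).
  by field; rewrite gt_eqF.
rewrite sqrtrM ?addr_ge0 ?sqr_ge0 // sqrtr_sqr ger0_norm // invr_ge0 ltW //.
Qed.

Lemma chordalC (a b : sphere R) : chordal a b = chordal b a.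
Proof. by case: a b => [x|] [y|] //=; rewrite cnormB [NN x * _]mulrC. Qed.

Lemma chSS x y : chordal (Some x) (Some y) = 2 * cnorm (x - y) / (NN x * NN y).
Proof. by []. Qed.
Lemma chSN x : chordal (Some x) None = 2 / NN x.
Proof. by []. Qed.
Lemma chNS x : chordal None (Some x) = 2 / NN x.
Proof. by []. Qed.
Lemma phiS0 : phi (Some (0 : R[i])) = None.
Proof. by rewrite /phi eq_refl. Qed.
Lemma phiSn x : x != 0 -> phi (Some x) = Some (- (x^*)^-1).
Proof. by move=> nx; rewrite /phi (negbTE nx). Qed.
Lemma phiN : phi None = Some (0 : R[i]).
Proof. by []. Qed.

Lemma chordal_phi (a b : sphere R) : chordal (phi a) (phi b) = chordal a b.
Proof.
have key : forall x y, chordal (phi (Some x)) (phi (Some y)) = chordal (Some x) (Some y).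
  move=> x y.
  case: (eqVneq x 0) => [->|nx]; case: (eqVneq y 0) => [->|ny].
  - by rewrite phiS0 chSS subrr cnorm0 !mulr0 mul0r.
  - rewrite phiS0 phiSn // chNS chSS NNphi // NN0 sub0r cnormN mul1r.
    by field; rewrite !gt_eqF ?NN_gt0 ?cnorm_gt0.
  - rewrite phiS0 phiSn // chSN chSS NNphi // NN0 subr0 mulr1.
    by field; rewrite !gt_eqF ?NN_gt0 ?cnorm_gt0.
  - rewrite !phiSn // !chSS !NNphi //.
    have -> : - (x^*)^-1 - - (y^*)^-1 = (x - y)^* * ((x^*)^-1 * (y^*)^-1).
      rewrite rmorphB /=; field.
      by rewrite !conjC_eq0 nx ny.
    rewrite cnormM cnormM !cnormV !cnormJ.
    by field; rewrite !gt_eqF ?NN_gt0 ?cnorm_gt0.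
case: a b => [x|] [y|]; first exact: key.
- rewrite phiN chSN.
  case: (eqVneq x 0) => [->|nx]; first by rewrite phiS0 chNS !NN0.
  by rewrite phiSn // chSS NNphi // NN0 subr0 mulr1 cnormN cnormV cnormJ; field; rewrite !gt_eqF ?NN_gt0 ?cnorm_gt0.
- rewrite phiN chNS.
  case: (eqVneq y 0) => [->|ny]; first by rewrite phiS0 chSN.
  by rewrite phiSn // chSS NNphi // NN0 sub0r mul1r cnormN cnormN cnormV cnormJ; field; rewrite !gt_eqF ?NN_gt0 ?cnorm_gt0.
- by rewrite phiN chSS subrr cnorm0 !mulr0 mul0r.
Qed.
End S.
Section Topo.
Variable R : realType.
Variable f : sphere R -> sphere R.
Hypothesis fphi : forall s, f (phi s) = phi (f s).

Lemma iter_phi n s : iter n f (phi s) = phi (iter n f s).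
Proof. by elim: n => [|n IH] //=; rewrite IH fphi. Qed.

Lemma sopen_phi (U : sphere R -> Prop) : sopen U -> sopen (fun s => U (phi s)).
Proof.
move=> oU x Ux; have [e [e0 He]] := oU _ Ux; exists e; split=> // y xy.
by apply: He; rewrite chordal_phi.
Qed.

Lemma sconnected_phi (A : sphere R -> Prop) :
  sconnected A -> sconnected (fun s => A (phi s)).
Proof.
move=> cA U V oU oV cov [x [Ax Ux]] [y [Ay Vy]].
have H1 := sopen_phi oU; have H2 := sopen_phi oV.
have H3 : forall t : sphere R, A t -> U (phi t) \/ V (phi t).
  by move=> t At; apply: cov; rewrite phiK.
have H4 : exists t : sphere R, A t /\ U (phi t) by exists (phi x); rewrite phiK.
have H5 : exists t : sphere R, A t /\ V (phi t) by exists (phi y); rewrite phiK.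
have [t [At Ut Vt]] := cA _ _ H1 H2 H3 H4 H5.
by exists (phi t); rewrite phiK.
Qed.

Lemma fatou_phi x : fatou f x -> fatou f (phi x).
Proof.
move=> [U [oU Ux nU]]; exists (fun s => U (phi s)); split.
- exact: sopen_phi.
- by rewrite phiK.
move=> m; have [s [sinc [h Hh]]] := nU m; exists s; split=> //.
exists (fun y => phi (h (phi y))) => x0 Ux0.
have [d [d0 Hd Hc]] := Hh _ Ux0; exists d; split=> //.
  by move=> y xy; apply: Hd; rewrite chordal_phi.
move=> e e0; have [N HN] := Hc e e0; exists N => k Nk y xy.
rewrite -{1}(phiK y) iter_phi chordal_phi; apply: HN => //.
by rewrite chordal_phi.
Qed.

Lemma fatou_component_phi (O : sphere R -> Prop) :
  fatou_component f O -> fatou_component f (fun s => O (phi s)).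
Proof.
move=> [[x Ox] Of cO mO]; split.
- by exists (phi x); rewrite phiK.
- by move=> y Oy; rewrite -(phiK y); apply: fatou_phi; apply: Of.
- exact: sconnected_phi.
move=> B cB OB Bf y By.
apply: (mO (fun s => B (phi s))).
- exact: sconnected_phi.
- by move=> t Ot; apply: OB; rewrite phiK.
- by move=> t Bt; rewrite -(phiK t); apply: fatou_phi; apply: Bf.
by rewrite phiK.
Qed.

Lemma forward_invariant_phi (O : sphere R -> Prop) :
  forward_invariant f O -> forward_invariant f (fun s => O (phi s)).
Proof.
move=> [H1 H2]; split.
  by move=> x Ox; rewrite -fphi; apply: H1.
move=> y Oy; have [x [Ox fx]] := H2 _ Oy.
by exists (phi x); rewrite phiK fphi fx phiK.
Qed.
End Topo.

Section An.
Variable R : realType.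

Definition Dv (F : R[i] -> R[i]) (a l : R[i]) :=
  forall e : R, 0 < e -> exists d : R, 0 < d /\ forall z, cnorm (z - a) < d ->
    cnorm (F z - F a - l * (z - a)) <= e * cnorm (z - a).

Lemma Dv_lip F a l : Dv F a l -> exists d K : R, [/\ 0 < d, 0 < K &
  forall z, cnorm (z - a) < d -> cnorm (F z - F a) <= K * cnorm (z - a)].
Proof.
move=> DF; have [d [d0 Hd]] := DF 1 ltr01.
exists d, (1 + cnorm l); split=> //; first by rewrite ltr_pwDl ?cnorm_ge0.
move=> z za; have h1 := Hd z za.
have := cnormD (F z - F a - l * (z - a)) (l * (z - a)).
rewrite subrK cnormM => h2.
have := cnorm_ge0 l; have := cnorm_ge0 (z - a); nra.
Qed.

Lemma Dv_cont F a l : Dv F a l -> forall e : R, 0 < e -> exists d : R, 0 < d /\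
  forall z, cnorm (z - a) < d -> cnorm (F z - F a) < e.
Proof.
move=> DF e e0; have [d [K [d0 K0 HK]]] := Dv_lip DF.
exists (Num.min d (e / K)); split; first by rewrite lt_min d0 divr_gt0.
move=> z; rewrite lt_min => /andP[z1 z2].
apply: (le_lt_trans (HK z z1)).
by rewrite mulrC -ltr_pdivlMr.
Qed.

Lemma Dv_loc F G a l : Dv F a l ->
  (exists d : R, 0 < d /\ forall z, cnorm (z - a) < d -> G z = F z) -> Dv G a l.
Proof.
move=> DF [d [d0 Hd]] e e0; have [d' [d'0 H]] := DF e e0.
exists (Num.min d d'); split; first by rewrite lt_min d0 d'0.
move=> z; rewrite lt_min => /andP[z1 z2].
rewrite Hd // (Hd a) ?subrr ?cnorm0 //; exact: H.
Qed.

Lemma Dv_opp F a l : Dv F a l -> Dv (fun z => - F z) a (- l).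
Proof.
move=> DF e e0; have [d [d0 H]] := DF e e0; exists d; split=> // z za.
have -> : - F z - - F a - - l * (z - a) = - (F z - F a - l * (z - a)) by ring.
by rewrite cnormN; apply: H.
Qed.

Definition nu (z : R[i]) := - z^*.

Lemma nuK : involutive nu.
Proof. by move=> z; rewrite /nu rmorphN /= conjCK opprK. Qed.

Lemma cnorm_nu z : cnorm (nu z) = cnorm z.
Proof. by rewrite /nu cnormN cnormJ. Qed.

Lemma nuB z w : nu z - nu w = nu (z - w).
Proof. by rewrite /nu rmorphB /=; ring. Qed.

Lemma Dv_nu K a k : Dv K (nu a) k -> Dv (fun z => nu (K (nu z))) a (k^*).
Proof.
move=> DK e e0; have [d [d0 H]] := DK e e0; exists d; split=> // z za.
have -> : nu (K (nu z)) - nu (K (nu a)) - k^* * (z - a) =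
          nu (K (nu z) - K (nu a) - k * (nu z - nu a)).
  by rewrite /nu !rmorphB /= rmorphM /= rmorphB /= !rmorphN /= !conjCK; ring.
have h := H (nu z); rewrite nuB cnorm_nu in h.
by rewrite cnorm_nu nuB; apply: h.
Qed.

Lemma Dv_comp F G a l k : Dv F a l -> Dv G (F a) k ->
  Dv (fun z => G (F z)) a (k * l).
Proof.
move=> DF DG e e0.
have [d0 [K [d00 K0 HK]]] := Dv_lip DF.
have e1 : 0 < e / (2 * K) by rewrite divr_gt0 ?mulr_gt0.
have [dG [dG0 HG]] := DG _ e1.
have k1 : 0 < cnorm k + 1 by rewrite ltr_wpDl ?cnorm_ge0.
have e2 : 0 < e / (2 * (cnorm k + 1)) by rewrite divr_gt0 ?mulr_gt0.
have [dF [dF0 HF]] := DF _ e2.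
exists (Num.min d0 (Num.min dF (dG / K))); split.
  by rewrite !lt_min d00 dF0 divr_gt0.
move=> z; rewrite !lt_min => /andP[z1 /andP[z2 z3]].
have fz := HK z z1.
have fz2 : cnorm (F z - F a) < dG.
  apply: (le_lt_trans fz); by rewrite mulrC -ltr_pdivlMr.
have hg := HG (F z) fz2.
have hf := HF z z2.
have -> : G (F z) - G (F a) - k * l * (z - a) =
   (G (F z) - G (F a) - k * (F z - F a)) + k * (F z - F a - l * (z - a)) by ring.
apply: (le_trans (cnormD _ _)); rewrite cnormM.
set P := cnorm (F z - F a) in fz hg *.
set Q := cnorm (z - a) in fz hf *.
set X := cnorm (G (F z) - G (F a) - k * (F z - F a)) in hg *.
set Y := cnorm (F z - F a - l * (z - a)) in hf *.
have Q0 : 0 <= Q by apply: cnorm_ge0.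
have kk : 0 <= cnorm k by apply: cnorm_ge0.
have h1 : X <= e / 2 * Q.
  apply: (le_trans hg); apply: (@le_trans _ _ (e / (2 * K) * (K * Q))).
    by rewrite ler_wpM2l // ltW.
  by rewrite mulrA; apply: ler_wpM2r => //; rewrite le_eqVlt; apply/orP; left;
     apply/eqP; field; rewrite gt_eqF.
have h2 : cnorm k * Y <= e / 2 * Q.
  apply: (@le_trans _ _ (cnorm k * (e / (2 * (cnorm k + 1)) * Q))).
    by rewrite ler_wpM2l.
  rewrite mulrA; apply: ler_wpM2r => //.
  rewrite -subr_ge0.
  have -> : e / 2 - cnorm k * (e / (2 * (cnorm k + 1))) = e / (2 * (cnorm k + 1)).
    by field; rewrite gt_eqF.
  exact: ltW.
lra.
Qed.
Lemma Dv_inv a : a != 0 -> Dv (fun z => z^-1) a (- (a ^+ 2)^-1).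
Proof.
move=> na e e0; set A := cnorm a; have A0 : 0 < A by apply: cnorm_gt0.
exists (Num.min (A / 2) (e * A ^+ 3 / 2)); split.
  by rewrite lt_min !divr_gt0 ?mulr_gt0 ?exprn_gt0.
move=> z; rewrite lt_min => /andP[z1 z2].
set Q := cnorm (z - a) in z1 z2 *.
have Q0 : 0 <= Q by apply: cnorm_ge0.
have zA : A / 2 <= cnorm z.
  have := cnormD z (a - z); rewrite addrC subrK -/A cnormB -/Q; lra.
have zpos : 0 < cnorm z by apply: lt_le_trans zA; rewrite divr_gt0.
have nz : z != 0 by rewrite -cnorm_eq0 gt_eqF.
have -> : z^-1 - a^-1 - - (a ^+ 2)^-1 * (z - a) = (z - a) * (z - a) * (z^-1 * (a ^+ 2)^-1).
  by field; rewrite na nz.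
rewrite !cnormM !cnormV expr2 cnormM -/Q -/A.
rewrite -mulrA [e * Q]mulrC; apply: ler_wpM2l => //.
have iz : (cnorm z)^-1 <= 2 / A.
  rewrite -(invrK (2 / A)) lef_pV2 ?posrE ?invr_gt0 ?divr_gt0 // invf_div //.
apply: (@le_trans _ _ (Q * (2 / A * (A * A)^-1))).
  apply: ler_wpM2l => //; apply: ler_wpM2r => //; by rewrite invr_ge0 mulr_ge0 ?ltW.
apply: (@le_trans _ _ (e * A ^+ 3 / 2 * (2 / A * (A * A)^-1))).
  apply: ler_wpM2r; [by rewrite !divr_ge0 ?mulr_ge0 ?ltW | exact: ltW].
rewrite le_eqVlt; apply/orP; left; apply/eqP; field; rewrite gt_eqF //.
Qed.
Lemma qE (u l z a : R[i]) : z != a ->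
  cnorm (u / (z - a) - l) * cnorm (z - a) = cnorm (u - l * (z - a)).
Proof.
move=> nza; rewrite -cnormM; congr cnorm; field.
by rewrite subr_eq0.
Qed.

Lemma Dv_at (F : R[i] -> R[i]) a l (e : R) : 0 < e ->
  cnorm (F a - F a - l * (a - a)) <= e * cnorm (a - a).
Proof. by move=> _; rewrite !subrr mulr0 subrr cnorm0 mulr0. Qed.

Lemma cdiff_Dv g a : cdiff g a -> exists l, Dv g a l.
Proof.
move=> [l H]; exists l => e e0; have [d [d0 Hd]] := H e e0; exists d; split=> // z za.
case: (eqVneq z a) => [->|nza]; first by rewrite !subrr mulr0 subrr cnorm0 mulr0.
have h := Hd z; rewrite za andbT cnorm_gt0 ?subr_eq0 // in h.
rewrite -(qE (g z - g a) l nza); apply: ler_wpM2r; first exact: cnorm_ge0.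
by apply: ltW; apply: h.
Qed.

Lemma Dv_cdiff g a l : Dv g a l -> cdiff g a.
Proof.
move=> D; exists l => e e0; have [d [d0 Hd]] := D (e / 2) (ltac:(by rewrite divr_gt0)).
exists d; split=> // z /andP[za1 za2].
have nza : z != a by rewrite -subr_eq0 -cnorm_eq0 gt_eqF.
have h := Hd z za2; rewrite -(qE _ _ nza) in h.
have h2 : cnorm ((g z - g a) / (z - a) - l) <= e / 2 by rewrite -(ler_pM2r za1).
lra.
Qed.

Lemma hd_Dv (g : R[i] -> sphere R) a b l : has_deriv g a b l ->
  [/\ g a = Some b,
      (exists d : R, 0 < d /\ forall z, cnorm (z - a) < d -> g z != None) &
      Dv (fun z => odflt 0 (g z)) a l].
Proof.
move=> [ga H]; split=> //.
  have [d [d0 Hd]] := H 1 ltr01; exists d; split=> // z za.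
  case: (eqVneq z a) => [->|nza]; first by rewrite ga.
  have [|w [-> _]] // := Hd z; by rewrite za andbT cnorm_gt0 ?subr_eq0.
move=> e e0; have [d [d0 Hd]] := H e e0; exists d; split=> // z za.
case: (eqVneq z a) => [->|nza]; first by rewrite !subrr mulr0 subrr cnorm0 mulr0.
have [|w [gz h]] // := Hd z; first by rewrite za andbT cnorm_gt0 ?subr_eq0.
rewrite gz ga /= -(qE (w - b) l nza); apply: ler_wpM2r; first exact: cnorm_ge0.
exact: ltW.
Qed.

Lemma Dv_hd (g : R[i] -> sphere R) a b l : g a = Some b ->
  (exists d : R, 0 < d /\ forall z, cnorm (z - a) < d -> g z != None) ->
  Dv (fun z => odflt 0 (g z)) a l -> has_deriv g a b l.
Proof.
move=> ga [d0 [d00 H0]] D; split=> // e e0.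
have [d [d1 Hd]] := D (e / 2) (ltac:(by rewrite divr_gt0)).
exists (Num.min d0 d); split; first by rewrite lt_min d00 d1.
move=> z /andP[za1]; rewrite lt_min => /andP[za2 za3].
have nza : z != a by rewrite -subr_eq0 -cnorm_eq0 gt_eqF.
have := H0 z za2; case gz: (g z) => [w|] // _; exists w; split=> //.
have h := Hd z za3; rewrite gz ga /= -(qE _ _ nza) in h.
have h2 : cnorm ((w - b) / (z - a) - l) <= e / 2 by rewrite -(ler_pM2r za1).
lra.
Qed.
Lemma nu0 : nu 0 = 0 :> R[i].
Proof. by rewrite /nu rmorph0 oppr0. Qed.
Lemma conjE (x : R[i]) : x^* = - nu x.
Proof. by rewrite /nu opprK. Qed.
Lemma nu_neq0 (x : R[i]) : (nu x != 0) = (x != 0).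
Proof. by rewrite /nu oppr_eq0 conjC_eq0. Qed.
Lemma phiSnu (z : R[i]) : z != 0 -> phi (Some z) = Some ((nu z)^-1).
Proof. by move=> nz; rewrite phiSn // /nu invrN. Qed.
Lemma phi_cinv (z : R[i]) : phi (Some z) = cinv (Some (nu z)).
Proof.
case: (eqVneq z 0) => [->|nz]; first by rewrite phiS0 nu0 /cinv eq_refl.
have nnz : nu z != 0 by rewrite nu_neq0.
by rewrite phiSnu // /cinv (negbTE nnz).
Qed.
Lemma cinv_phi (z : R[i]) : cinv (Some z) = phi (Some (nu z)).
Proof. by rewrite phi_cinv nuK. Qed.
Lemma phicinv (z : R[i]) : phi (cinv (Some z)) = Some (nu z).
Proof. by rewrite cinv_phi phiK. Qed.
Lemma cinvphi (t : sphere R) : cinv (phi t) = omap nu t.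
Proof.
case: t => [z|]; last by rewrite phiN /cinv eq_refl.
case: (eqVneq z 0) => [->|nz]; first by rewrite phiS0 /cinv /= nu0.
have nnz : (nu z)^-1 != 0 by rewrite invr_eq0 nu_neq0.
by rewrite phiSnu // /cinv (negbTE nnz) invrK.
Qed.
Lemma nuV (x : R[i]) : nu (x^-1) = (nu x)^-1.
Proof. by rewrite /nu fmorphV invrN. Qed.
Lemma omap_nuK (t : sphere R) : omap nu (omap nu t) = t.
Proof. by case: t => [z|] //=; rewrite nuK. Qed.

Lemma hd_sig (g : R[i] -> sphere R) l : has_deriv g 0 0 l ->
  has_deriv (fun z => omap nu (g (nu z))) 0 0 (l^*).
Proof.
move=> [g0 H]; split; first by rewrite nu0 g0 /= nu0.
move=> e e0; have [d [d0 Hd]] := H e e0; exists d; split=> // z /andP[z1 z2].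
rewrite subr0 in z1 z2.
have [|w [gw hw]] := Hd (nu z); first by rewrite subr0 cnorm_nu z1 z2.
exists (nu w); split; first by rewrite gw.
have -> : (nu w - 0) / (z - 0) - l^* = ((w - 0) / (nu z - 0) - l)^*.
  rewrite !subr0 /nu rmorphB /= rmorphM /= fmorphV /= rmorphN /= conjCK.
  by rewrite invrN mulrN mulNr.
by rewrite cnormJ.
Qed.
Section Mult.
Variable f : sphere R -> sphere R.
Hypothesis fphi : forall s, f (phi s) = phi (f s).

Lemma multA (a l : R[i]) : a != 0 -> multiplier f (Some a) l ->
  multiplier f (phi (Some a)) (l^*).
Proof.
move=> na [fz Hd].
have [_ [d0 [d00 H0]] DF] := hd_Dv Hd.
set F := fun z => odflt 0 (f (Some z)) in DF.
have Fa : F a = a by rewrite /F fz.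
have fb : f (Some ((nu a)^-1)) = Some ((nu a)^-1) by rewrite -phiSnu // fphi fz.
rewrite phiSnu //; split=> //.
set b := (nu a)^-1 in fb *.
have na' : a^-1 != 0 by rewrite invr_eq0.
have nb : b != 0 by rewrite invr_eq0 nu_neq0.
have nub : nu b = a^-1 by rewrite /b -nuV nuK.
have [d2 [d20 H2]] := Dv_cont DF (cnorm_gt0 na).
have md : 0 < Num.min d0 d2 by rewrite lt_min d00 d20.
have [d3 [d30 H3]] := Dv_cont (Dv_inv na') md.
have near : forall z, cnorm (z - b) < Num.min d3 (cnorm b) ->
    f (Some z) = Some (nu ((F ((nu z)^-1))^-1)).
  move=> z; rewrite lt_min => /andP[z1 z2].
  have nz : z != 0.
    by apply/eqP => z0; move: z2; rewrite z0 sub0r cnormN ltxx.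
  have u1 : cnorm ((nu z)^-1 - a) < Num.min d0 d2.
    have := H3 (nu z); rewrite invrK; apply.
    by rewrite -nub nuB cnorm_nu.
  move: u1; rewrite lt_min => /andP[u1 u2].
  have := H0 _ u1; set u := (nu z)^-1.
  have fzu : f (Some z) = phi (f (Some u)) by rewrite -fphi /u -(phiSnu nz) phiK.
  have := H2 _ u2; rewrite Fa /F.
  case fu : (f (Some u)) => [w|] //= wa _.
  have nw : w != 0.
    by apply/eqP => w0; move: wa; rewrite w0 sub0r cnormN ltxx.
  by rewrite fzu fu phiSnu // nuV.
set K := fun w => (F (w^-1))^-1.
have DK : Dv K (nu b) l.
  rewrite nub.
  have D1 := Dv_inv na'.
  have D2 : Dv F (a^-1^-1) l by rewrite invrK.
  have D3 := Dv_comp D1 D2.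
  have D4 : Dv (fun z => z^-1) (F (a^-1^-1)) (- (a ^+ 2)^-1).
    by rewrite invrK Fa; apply: Dv_inv.
  have D5 := Dv_comp D3 D4.
  suff <- : - (a ^+ 2)^-1 * (l * - (a^-1 ^+ 2)^-1) = l by exact: D5.
  by field.
have mb : 0 < Num.min d3 (cnorm b) by rewrite lt_min d30 cnorm_gt0.
apply: Dv_hd => //.
  exists (Num.min d3 (cnorm b)); split=> // z zb; by rewrite near.
apply: (Dv_loc (Dv_nu DK)).
exists (Num.min d3 (cnorm b)); split=> // z zb; by rewrite near.
Qed.
Lemma mult_phi zeta l : multiplier f zeta l -> multiplier f (phi zeta) (l^*).
Proof.
case: zeta => [a|].
- case: (eqVneq a 0) => [->|na]; last exact: multA.
  move=> [fz Hd]; rewrite phiS0; split; first by rewrite -phiS0 fphi fz.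
  have -> : (fun z => cinv (f (cinv (Some z)))) = (fun z => omap nu (f (Some (nu z)))).
    by apply: functional_extensionality => z; rewrite cinv_phi fphi cinvphi.
  exact: (hd_sig Hd).
- move=> [fz Hd]; rewrite phiN; split; first by rewrite -phiN fphi fz.
  have -> : (fun z => f (Some z)) =
      (fun z => omap nu ((fun w => cinv (f (cinv (Some w)))) (nu z))).
    by apply: functional_extensionality => z; rewrite cinv_phi fphi cinvphi nuK omap_nuK.
  exact: (hd_sig Hd).
Qed.

Lemma attracting_phi (O : sphere R -> Prop) : attracting_comp f O -> attracting_comp f (fun s => O (phi s)).
Proof.
move=> [zeta [l [Oz m ll]]]; exists (phi zeta), (l^*); split.
- by rewrite phiK.
- exact: mult_phi.
- by rewrite cnormJ.
Qed.

Lemma superattracting_phi (O : sphere R -> Prop) :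
  superattracting_comp f O -> superattracting_comp f (fun s => O (phi s)).
Proof.
move=> [zeta [Oz m]]; exists (phi zeta); split; first by rewrite phiK.
by have := mult_phi m; rewrite rmorph0.
Qed.

Lemma parabolic_phi (O : sphere R -> Prop) : parabolic_comp f O -> parabolic_comp f (fun s => O (phi s)).
Proof.
move=> [zeta [l [n [[nO close] m [n0 ln] conv]]]].
exists (phi zeta), (l^*), n; split.
- split; first by rewrite phiK.
  move=> e e0; have [s [Os cs]] := close e e0; exists (phi s).
  by rewrite phiK chordal_phi.
- exact: mult_phi.
- by split=> //; rewrite -rmorphXn ln rmorph1.
- move=> s Os e e0; have [N HN] := conv _ Os e e0; exists N => k kN.
  by rewrite -{1}(phiK s) (iter_phi fphi) chordal_phi; apply: HN.
Qed.

Lemma holo_phi (h : sphere R -> R[i]) (O : sphere R -> Prop) : holo_on h O ->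
  holo_on (fun s => (h (phi s))^*) (fun s => O (phi s)).
Proof.
move=> hol s Os; have := hol _ Os; case: s Os => [a|] Os.
- case: (eqVneq a 0) => [a0|na].
  + subst a; rewrite phiS0 => cd.
    have [k Dk] := cdiff_Dv cd.
    have Dk' : Dv (fun z => h (cinv (Some z))) (nu 0) k by rewrite nu0.
    apply: (Dv_cdiff (Dv_loc (Dv_opp (Dv_nu Dk')) _)).
    exists 1; split=> // z _; by rewrite phi_cinv conjE.
  + rewrite phiSnu // => cd.
    have [k Dk] := cdiff_Dv cd.
    have nna : nu a != 0 by rewrite nu_neq0.
    have D2 := Dv_comp (Dv_inv nna) Dk.
    apply: (Dv_cdiff (Dv_loc (Dv_opp (Dv_nu D2)) _)).
    exists (cnorm a); split; first exact: cnorm_gt0.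
    move=> z za; have nz : z != 0.
      by apply/eqP => z0; move: za; rewrite z0 sub0r cnormN ltxx.
    by rewrite phiSnu // conjE.
- rewrite phiN => cd.
  have [k Dk] := cdiff_Dv cd.
  have Dk' : Dv (fun z => h (Some z)) (nu 0) k by rewrite nu0.
  apply: (Dv_cdiff (Dv_loc (Dv_opp (Dv_nu Dk')) _)).
  exists 1; split=> // z _; by rewrite phicinv conjE.
Qed.

Lemma rotJ (theta : R) : (Defs.rot theta)^* = Defs.rot (- theta).
Proof.
rewrite /Defs.rot mulrN cosN sinN.
by [].
Qed.

Lemma cir_phi (O : sphere R -> Prop) (D : R[i] -> Prop) : (forall w, D w -> D (w^*)) ->
  conj_irr_rotation f O D -> conj_irr_rotation f (fun s => O (phi s)) D.
Proof.
move=> DJ [h [theta [irr holo HD [inj surj] rotE]]].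
exists (fun s => (h (phi s))^*), (- theta); split.
- move=> r; apply/eqP => e; move: (irr (- r)).
  by rewrite rmorphN /= -e opprK eqxx.
- exact: holo_phi.
- by move=> s Os; apply: DJ; apply: HD.
- split.
    move=> s t Os Ot e.
    have e' : h (phi s) = h (phi t) by rewrite -(conjCK (h (phi s))) e conjCK.
    by rewrite -(phiK s) -(phiK t) (inj _ _ Os Ot e').
  move=> w Dw; have [s [Os hs]] := surj _ (DJ _ Dw).
  by exists (phi s); rewrite phiK hs conjCK.
- by move=> s Os; rewrite -fphi rotE // rmorphM /= rotJ.
Qed.

Lemma siegel_phi (O : sphere R -> Prop) : siegel_disk f O -> siegel_disk f (fun s => O (phi s)).
Proof. by apply: cir_phi => w; rewrite cnormJ. Qed.

Lemma herman_phi (O : sphere R -> Prop) : herman_ring f O -> herman_ring f (fun s => O (phi s)).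
Proof.
move=> [r1 [r2 [rr cir]]]; exists r1, r2; split=> //.
by apply: cir_phi cir => w; rewrite cnormJ.
Qed.
End Mult.

Lemma sym_iff (P : (sphere R -> Prop) -> Prop) (O : sphere R -> Prop) :
  (forall O, P O -> P (fun s => O (phi s))) -> P O <-> P (fun s => O (phi s)).
Proof.
move=> tr; split; first exact: tr.
move=> H; have := tr _ H.
have -> : (fun s => (fun s => O (phi s)) (phi s)) = O.
  by apply: functional_extensionality => s /=; rewrite phiK.
by [].
Qed.
End An.

Theorem mainTheorem2 (R : realType) (f : sphere R -> sphere R) (d : nat)
    (Omega : sphere R -> Prop) :
  (2 <= d)%N -> rational_map f d ->
  (forall s, f (phi s) = phi (f s)) ->
  fatou_component f Omega -> forward_invariant f Omega ->
  let W := fun s => exists t, Omega t /\ phi t = s in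
  [/\ fatou_component f W, forward_invariant f W & same_type f Omega W].
Proof.
move=> _ _ fphi comp fi W.
have -> : W = (fun s => Omega (phi s)).
  apply: functional_extensionality => s; apply: propositional_extensionality; split.
  - by move=> [t [Ot <-]]; rewrite phiK.
  - by move=> O; exists (phi s); rewrite phiK.
split.
- exact: fatou_component_phi.
- exact: forward_invariant_phi.
split; apply: sym_iff => O.
- exact: attracting_phi.
- exact: superattracting_phi.
- exact: parabolic_phi.
- exact: siegel_phi.
- exact: herman_phi.
Qed.
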